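(* A CPTP map $\mathcal M:\mathbf L(\mathcal H_X\otimes\mathcal H_Y)\to\mathbf L(\mathcal H_A\otimes\mathcal H_B)$ belongs to $\mathrm{LOCC}^*$ if and only if it can be written as $\mathcal M=\sum_{a,b}\mathcal A_{a|b}\otimes\mathcal B_{b|a}$, where for each $b$ the family $\{\mathcal A_{a|b}\}_a$ is a quantum instrument $\mathbf L(\mathcal H_X)\to\mathbf L(\mathcal H_A)$ and for each $a$ the family $\{\mathcal B_{b|a}\}_b$ is a quantum instrument $\mathbf L(\mathcal H_Y)\to\mathbf L(\mathcal H_B)$ (finite index sets).
   Context: A quantum instrument with classical input $i$ is a family $\{\mathcal A_{o|i}\}_o$ of completely positive linear maps with $\sum_o\mathcal A_{o|i}$ trace preserving for each $i$. $\mathrm{LOCC}^*$ is the set of CPTP maps of the form $\sum_{i_A,i_B,o_A,o_B}p(i_A,i_B|o_A,o_B)\,\mathcal A_{o_A|i_A}\otimes\mathcal B_{o_B|i_B}$ with instruments $\{\mathcal A_{o_A|i_A}\}_{o_A}$ (on Alice's side, $\mathbf L(\mathcal H_X)\to\mathbf L(\mathcal H_A)$), $\{\mathcal B_{o_B|i_B}\}_{o_B}$ (Bob's side, $\mathbf L(\mathcal H_Y)\to\mathbf L(\mathcal H_B)$) and a conditional probability distribution $p(i_A,i_B|o_A,o_B)$ over finite sets. *)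

(* Defs.v *)
From HB Require Import structures.
From mathcomp Require Import all_boot all_order all_algebra.
From mathcomp Require Import mxtens.
Set Implicit Arguments. Unset Strict Implicit. Unset Printing Implicit Defensive.
Import Order.TTheory GRing.Theory Num.Theory.
Local Open Scope ring_scope.

Section Quantum.
Variable C : numClosedFieldType.

Definition adjmx m n (A : 'M[C]_(m, n)) : 'M[C]_(n, m) := (map_mx Num.conj A)^T.

Definition psd n (P : 'M[C]_n) : Prop :=
  forall v : 'cV[C]_n, 0 <= (adjmx v *m P *m v) 0 0.

Definition supermap m n := 'M[C]_m -> 'M[C]_n.

Definition is_linear_map m n (f : supermap m n) : Prop :=
  forall (a : C) (x y : 'M[C]_m), f (a *: x + y) = a *: f x + f y.

(* tensor product of two linear maps, defined on the matrix-unit basis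
   of L(C^m1 (x) C^m2) = 'M_(m1*m2) (index (i,k) <-> mxtens_index (i,k)) *)
Definition tensor_map m1 n1 m2 n2 (f : supermap m1 n1) (g : supermap m2 n2)
  : supermap (m1 * m2) (n1 * n2) :=
  fun M => \sum_(i < m1) \sum_(j < m1) \sum_(k < m2) \sum_(l < m2)
     M (mxtens_index (i, k)) (mxtens_index (j, l))
       *: (f (delta_mx i j) *t g (delta_mx k l)).

Definition idmap_k k : supermap k k := fun M => M.

Definition positive_map m n (f : supermap m n) : Prop :=
  forall P : 'M[C]_m, psd P -> psd (f P).

Definition completely_positive m n (f : supermap m n) : Prop :=
  is_linear_map f /\
  forall k : nat, positive_map (tensor_map (@idmap_k k) f).

Definition trace_preserving m n (f : supermap m n) : Prop :=
  forall M : 'M[C]_m, \tr (f M) = \tr M.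

Definition CPTP m n (f : supermap m n) : Prop :=
  completely_positive f /\ trace_preserving f.

Definition instrument m n (O : finType) (A : O -> supermap m n) : Prop :=
  (forall o, completely_positive (A o)) /\
  trace_preserving (fun M => \sum_(o : O) A o M).

Definition LOCCstar dX dY dA dB (M : supermap (dX * dY) (dA * dB)) : Prop :=
  exists (IA IB OA OB : finType)
         (A : IA -> OA -> supermap dX dA) (B : IB -> OB -> supermap dY dB)
         (p : IA -> IB -> OA -> OB -> C),
    (forall iA, instrument (A iA)) /\
    (forall iB, instrument (B iB)) /\
    (forall iA iB oA oB, 0 <= p iA iB oA oB) /\
    (forall oA oB, \sum_(iA : IA) \sum_(iB : IB) p iA iB oA oB = 1) /\
    (forall rho : 'M[C]_(dX * dY),
       M rho = \sum_(iA : IA) \sum_(iB : IB) \sum_(oA : OA) \sum_(oB : OB)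
                 p iA iB oA oB *: tensor_map (A iA oA) (B iB oB) rho).

End Quantum.

(* Main.v *)
Require Import Defs.
From HB Require Import structures.
From mathcomp Require Import all_boot all_order all_algebra.
From mathcomp Require Import mxtens.
Import Order.TTheory GRing.Theory Num.Theory.
Set Implicit Arguments. Unset Strict Implicit.
Local Open Scope ring_scope.

Section H.
Variable C : numClosedFieldType.

Lemma tensZl m n p q (c : C) (A : 'M[C]_(m,n)) (B : 'M[C]_(p,q)) :
  (c *: A) *t B = c *: (A *t B).
Proof. by apply/matrixP=> i j; rewrite !mxE mulrA. Qed.

Lemma tensZr m n p q (c : C) (A : 'M[C]_(m,n)) (B : 'M[C]_(p,q)) :
  A *t (c *: B) = c *: (A *t B).
Proof. by apply/matrixP=> i j; rewrite !mxE mulrCA. Qed.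

Definition sc m n (c : C) (f : supermap C m n) : supermap C m n :=
  fun X => c *: f X.

Lemma tensor_map_sc m1 n1 m2 n2 (c d : C) (f : supermap C m1 n1)
  (g : supermap C m2 n2) rho :
  tensor_map (sc c f) (sc d g) rho = (c * d) *: tensor_map f g rho.
Proof.
rewrite /tensor_map /sc scaler_sumr; apply: eq_bigr => i _.
rewrite scaler_sumr; apply: eq_bigr => j _.
rewrite scaler_sumr; apply: eq_bigr => k _.
rewrite scaler_sumr; apply: eq_bigr => l _.
by rewrite tensZl tensZr !scalerA -mulrA mulrC.
Qed.

Lemma tensor_map_scr m1 n1 m2 n2 (d : C) (f : supermap C m1 n1)
  (g : supermap C m2 n2) rho :
  tensor_map f (sc d g) rho = d *: tensor_map f g rho.
Proof.
rewrite /tensor_map /sc scaler_sumr; apply: eq_bigr => i _.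
rewrite scaler_sumr; apply: eq_bigr => j _.
rewrite scaler_sumr; apply: eq_bigr => k _.
rewrite scaler_sumr; apply: eq_bigr => l _.
by rewrite tensZr !scalerA mulrC.
Qed.

Lemma psd_sc n (c : C) (P : 'M[C]_n) : 0 <= c -> psd P -> psd (c *: P).
Proof.
move=> c0 hP v; rewrite -scalemxAr -scalemxAl mxE; exact: mulr_ge0.
Qed.

Lemma cp_sc m n (c : C) (f : supermap C m n) :
  0 <= c -> completely_positive f -> completely_positive (sc c f).
Proof.
move=> c0 [lf pf]; split.
  move=> a x y; rewrite /sc lf scalerDr !scalerA mulrC.
  done.
move=> k P hP; rewrite tensor_map_scr; apply: psd_sc => //; exact: pf.
Qed.

Lemma sum_delta (T : finType) (y : T) (F : T -> C) :
  \sum_(x : T) (x == y)%:R * F x = F y.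
Proof.
rewrite (bigD1 y) //= eqxx mul1r big1 ?addr0 // => x /negbTE ->.
by rewrite mul0r.
Qed.

Lemma sum_deltaV (T : finType) (V : lmodType C) (y : T) (F : T -> V) :
  \sum_(x : T) (x == y)%:R *: F x = F y.
Proof.
rewrite (bigD1 y) //= eqxx scale1r big1 ?addr0 // => x /negbTE ->.
by rewrite scale0r.
Qed.

Lemma tr_sumZ (I : finType) n (c : I -> C) (X : I -> 'M[C]_n) :
  \tr (\sum_i c i *: X i) = \sum_i c i * \tr (X i).
Proof. rewrite raddf_sum; apply: eq_bigr => i _; exact: mxtraceZ. Qed.

Lemma sum_pair (I J : finType) (V : nmodType) (F : I * J -> V) :
  \sum_(p : I * J) F p = \sum_i \sum_j F (i, j).
Proof. by rewrite pair_bigA; apply: eq_bigr => [[]]. Qed.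

Lemma le_sum1 (I : finType) (F : I -> C) i :
  (forall j, 0 <= F j) -> F i <= \sum_j F j.
Proof. by move=> h; rewrite (bigD1 i) //= lerDl sumr_ge0. Qed.

Section Fwd.
Variables (dX dY dA dB : nat) (IA IB OA OB : finType).
Variables (A : IA -> OA -> supermap C dX dA) (B : IB -> OB -> supermap C dY dB).
Variable p : IA -> IB -> OA -> OB -> C.
Hypothesis hAi : forall iA, instrument (A iA).
Hypothesis hBi : forall iB, instrument (B iB).
Hypothesis hp0 : forall iA iB oA oB, 0 <= p iA iB oA oB.
Hypothesis hp1 : forall oA oB, \sum_(iA : IA) \sum_(iB : IB) p iA iB oA oB = 1.

Definition K := (IA * IB * OA * OB)%type.
Definition T3 := ('I_3 * K)%type.
Definition pk (k : K) := p k.1.1.1 k.1.1.2 k.1.2 k.2.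
Definition dl (T : eqType) (x y : T) : C := (x == y)%:R.
Definition gA (k k' : K) : C :=
  dl k.1.1.1 k'.1.1.1 * dl k.1.1.2 k'.1.1.2 * dl k.2 k'.2.
Definition hB (k' k : K) : C :=
  dl k'.1.1.1 k.1.1.1 * dl k'.1.1.2 k.1.1.2 * dl k'.1.2 k.1.2.

Definition alA (b a : T3) : C :=
  let s := val b.1 in let k' := b.2 in let t := val a.1 in let k := a.2 in
  if s == 0%N then
    (if t == 0%N then dl k k' * pk k'
     else if t == 1%N then gA k k' - dl k k' * pk k' else 0)
  else if s == 1%N then (if t == 2%N then gA k k' else 0)
  else (if t == 1%N then gA k k' else 0).

Definition beB (a b : T3) : C :=
  let t := val a.1 in let k := a.2 in let s := val b.1 in let k' := b.2 in
  if t == 0%N then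
    (if s == 0%N then dl k' k
     else if s == 1%N then hB k' k - dl k' k else 0)
  else if t == 1%N then (if s == 1%N then hB k' k else 0)
  else (if s == 2%N then hB k' k else 0).

Lemma pk_le1 k : pk k <= 1.
Proof.
rewrite /pk -(hp1 k.1.2 k.2).
apply: le_trans (le_sum1 k.1.1.1 _) => [|j]; last by apply: sumr_ge0.
exact: le_sum1.
Qed.

Lemma dl_ge0 (T : eqType) (x y : T) : 0 <= dl x y.
Proof. exact: ler0n. Qed.

Lemma alA_ge0 b a : 0 <= alA b a.
Proof.
rewrite /alA.
have g0 : forall k k', 0 <= gA k k' by move=> k k'; rewrite /gA !mulr_ge0 ?dl_ge0.
case: ifP => _; last by repeat case: ifP => _; rewrite ?lexx ?g0.
case: ifP => _; first by rewrite mulr_ge0 ?dl_ge0 //; exact: hp0.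
case: ifP => _; last exact: lexx.
case: (eqVneq a.2 b.2) => [e|ne].
  by rewrite e /gA /dl !eqxx !mul1r subr_ge0 pk_le1.
by rewrite /dl (negbTE ne) mul0r subr0.
Qed.

Lemma beB_ge0 a b : 0 <= beB a b.
Proof.
rewrite /beB.
have g0 : forall k k', 0 <= hB k k' by move=> k k'; rewrite /hB !mulr_ge0 ?dl_ge0.
case: ifP => _; last by repeat case: ifP => _; rewrite ?lexx ?g0.
case: ifP => _; first exact: dl_ge0.
case: ifP => _; last exact: lexx.
case: (eqVneq b.2 a.2) => [e|ne].
  by rewrite e /hB /dl !eqxx !mul1r subrr.
by rewrite /dl (negbTE ne) subr0.
Qed.

Lemma sum_K (V : nmodType) (F : K -> V) :
  \sum_(k : K) F k = \sum_iA \sum_iB \sum_oA \sum_oB F (iA, iB, oA, oB).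
Proof.
rewrite sum_pair (sum_pair (fun x => \sum_oB F (x, oB))).
by rewrite (sum_pair (fun x => \sum_oA \sum_oB F (x, oA, oB))).
Qed.

Lemma sumA_g (F : IA -> OA -> C) k' :
  \sum_(k : K) gA k k' * F k.1.1.1 k.1.2 = \sum_oA F k'.1.1.1 oA.
Proof.
rewrite sum_K /gA /=.
transitivity (\sum_iA dl iA k'.1.1.1 * (\sum_iB dl iB k'.1.1.2 *
   \sum_oA \sum_oB dl oB k'.2 * F iA oA)).
  apply: eq_bigr => iA _; rewrite mulr_sumr; apply: eq_bigr => iB _.
  rewrite mulr_sumr mulr_sumr; apply: eq_bigr => oA _.
  rewrite mulr_sumr mulr_sumr; apply: eq_bigr => oB _.
  by rewrite !mulrA.
rewrite -(sum_delta k'.1.1.1 (fun iA => \sum_oA F iA oA)).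
apply: eq_bigr => iA _; congr (_ * _).
rewrite -(sum_delta k'.1.1.2 (fun iB => \sum_oA F iA oA)).
apply: eq_bigr => iB _; congr (_ * _).
apply: eq_bigr => oA _; exact: (sum_delta k'.2 (fun oB => F iA oA)).
Qed.

Lemma sumB_h (F : IB -> OB -> C) k :
  \sum_(k' : K) hB k' k * F k'.1.1.2 k'.2 = \sum_oB F k.1.1.2 oB.
Proof.
rewrite sum_K /hB /=.
transitivity (\sum_iA dl iA k.1.1.1 * (\sum_iB dl iB k.1.1.2 *
   \sum_oA dl oA k.1.2 * \sum_oB F iB oB)).
  apply: eq_bigr => iA _; rewrite mulr_sumr; apply: eq_bigr => iB _.
  rewrite mulr_sumr mulr_sumr; apply: eq_bigr => oA _.
  rewrite mulr_sumr mulr_sumr mulr_sumr; apply: eq_bigr => oB _.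
  by rewrite !mulrA.
rewrite -(sum_delta k.1.1.1 (fun iA => \sum_oB F k.1.1.2 oB)).
apply: eq_bigr => iA _; congr (_ * _).
rewrite -(sum_delta k.1.1.2 (fun iB => \sum_oB F iB oB)).
apply: eq_bigr => iB _; congr (_ * _).
exact: (sum_delta k.1.2 (fun oA => \sum_oB F iB oB)).
Qed.

Definition A' (b a : T3) : supermap C dX dA := sc (alA b a) (A a.2.1.1.1 a.2.1.2).
Definition B' (a b : T3) : supermap C dY dB := sc (beB a b) (B b.2.1.1.2 b.2.2).

Lemma instrA b : instrument (A' b).
Proof.
split.
  move=> a; apply: cp_sc; first exact: alA_ge0.
  exact: (hAi _).1.
move=> M; rewrite /A' /sc tr_sumZ sum_pair.
rewrite !big_ord_recl big_ord0 /=.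
have E : forall iA, \sum_oA \tr (A iA oA M) = \tr M.
  by move=> iA; rewrite -raddf_sum; exact: (hAi iA).2.
have Z : \sum_(j : K) 0 * \tr (A j.1.1.1 j.1.2 M) = 0.
  by rewrite big1 // => j _; rewrite mul0r.
have G : forall k', \sum_(j : K) gA j k' * \tr (A j.1.1.1 j.1.2 M) = \tr M.
  by move=> k'; rewrite (sumA_g (fun iA oA => \tr (A iA oA M))) E.
case: b => [[[|[|[|s]]] Hs] k'] //=; rewrite /alA /= ?Z ?G ?add0r ?addr0 //.
rewrite -big_split /= -(G k'); apply: eq_bigr => j _.
by rewrite -mulrDl addrC subrK.
Qed.

Lemma instrB a : instrument (B' a).
Proof.
split.
  move=> b; apply: cp_sc; first exact: beB_ge0.
  exact: (hBi _).1.
move=> M; rewrite /B' /sc tr_sumZ sum_pair.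
rewrite !big_ord_recl big_ord0 /=.
have E : forall iB, \sum_oB \tr (B iB oB M) = \tr M.
  by move=> iB; rewrite -raddf_sum; exact: (hBi iB).2.
have Z : \sum_(j : K) 0 * \tr (B j.1.1.2 j.2 M) = 0.
  by rewrite big1 // => j _; rewrite mul0r.
have G : forall k, \sum_(j : K) hB j k * \tr (B j.1.1.2 j.2 M) = \tr M.
  by move=> k; rewrite (sumB_h (fun iB oB => \tr (B iB oB M))) E.
case: a => [[[|[|[|t]]] Ht] k] //=; rewrite /beB /= ?Z ?G ?add0r ?addr0 //.
rewrite -big_split /= -(G k); apply: eq_bigr => j _.
by rewrite -mulrDl addrC subrK.
Qed.

Lemma prodAB (a b : T3) :
  alA b a * beB a b = dl a (ord0, a.2) * (dl b (ord0, a.2) * pk a.2).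
Proof.
case: a => [[[|[|[|t]]] Ht] k]; case: b => [[[|[|[|s]]] Hs] k'] //=;
  rewrite /alA /beB /dl /= ?mul0r ?mulr0 //.
rewrite !xpair_eqE /= eqxx mul1r.
case: (eqVneq k k') => [<-|ne]; first by rewrite mulr1 mul1r.
by rewrite !mul0r ?mulr0.
Qed.

Lemma decomp rho :
  \sum_(iA : IA) \sum_(iB : IB) \sum_(oA : OA) \sum_(oB : OB)
     p iA iB oA oB *: tensor_map (A iA oA) (B iB oB) rho =
  \sum_(a : T3) \sum_(b : T3) tensor_map (A' b a) (B' a b) rho.
Proof.
set T := fun (k k' : K) => tensor_map (A k.1.1.1 k.1.2) (B k'.1.1.2 k'.2) rho.
transitivity (\sum_(a : T3) \sum_(b : T3)
   dl b (ord0, a.2) *: ((dl a (ord0, a.2) * pk a.2) *: T a.2 b.2)); last first.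
  apply: eq_bigr => a _; apply: eq_bigr => b _.
  by rewrite /A' /B' tensor_map_sc prodAB scalerA mulrCA.
symmetry.
under eq_bigr => a _ do rewrite (sum_deltaV (ord0, a.2) (fun b => (dl a (ord0, a.2) * pk a.2) *: T a.2 b.2)) /=.
rewrite sum_pair exchange_big /=.
transitivity (\sum_(k : K) pk k *: T k k); last by rewrite sum_K.
apply: eq_bigr => k _.
under eq_bigr => t _ do rewrite /dl xpair_eqE eqxx andbT -scalerA.
by rewrite (sum_deltaV ord0 (fun t => pk k *: T k k)).
Qed.

Lemma fwd_ex (M : supermap C (dX * dY) (dA * dB)) :
  (forall rho : 'M[C]_(dX * dY),
       M rho = \sum_(iA : IA) \sum_(iB : IB) \sum_(oA : OA) \sum_(oB : OB)
                 p iA iB oA oB *: tensor_map (A iA oA) (B iB oB) rho) ->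
  exists (Ia Ib : finType)
          (A0 : Ib -> Ia -> supermap C dX dA) (B0 : Ia -> Ib -> supermap C dY dB),
     (forall b, instrument (A0 b)) /\
     (forall a, instrument (B0 a)) /\
     (forall rho : 'M[C]_(dX * dY),
        M rho = \sum_(a : Ia) \sum_(b : Ib) tensor_map (A0 b a) (B0 a b) rho).
Proof.
move=> hM; exists T3, T3, A', B'; split; first exact: instrA.
split; first exact: instrB.
by move=> rho; rewrite hM decomp.
Qed.

End Fwd.
Lemma bwd dX dY dA dB (M : supermap C (dX * dY) (dA * dB)) (Ia Ib : finType)
  (A : Ib -> Ia -> supermap C dX dA) (B : Ia -> Ib -> supermap C dY dB) :
  (forall b, instrument (A b)) -> (forall a, instrument (B a)) ->
  (forall rho : 'M[C]_(dX * dY),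
     M rho = \sum_(a : Ia) \sum_(b : Ib) tensor_map (A b a) (B a b) rho) ->
  LOCCstar M.
Proof.
move=> hA hB hM.
exists Ib, Ia, Ia, Ib, A, B, (fun iA iB oA oB => dl iA oB * dl iB oA).
split=> //; split=> //; split.
  by move=> *; rewrite mulr_ge0 ?dl_ge0.
split.
  move=> oA oB.
  transitivity (\sum_(iA : Ib) (iA == oB)%:R * (1 : C)); last exact: sum_delta.
  apply: eq_bigr => iA _; rewrite mulr1.
  under eq_bigr => iB _ do rewrite mulrC.
  exact: (sum_delta oA (fun _ => dl iA oB)).
move=> rho; rewrite hM exchange_big /=.
apply: eq_bigr => iA _; apply: eq_bigr => iB _.
symmetry.
under eq_bigr => oA _ do under eq_bigr => oB _ do rewrite -scalerA /dl eq_sym.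
under eq_bigr => oA _ do rewrite (sum_deltaV iA (fun oB => (iB == oA)%:R *: tensor_map (A iA oA) (B iB oB) rho)).
under eq_bigr => oA _ do rewrite eq_sym.
exact: (sum_deltaV iB (fun oA => tensor_map (A iA oA) (B iB iA) rho)).
Qed.

End H.

Unset Implicit Arguments.

Theorem mainTheorem14 (C : numClosedFieldType) (dX dY dA dB : nat)
  (M : supermap C (dX * dY) (dA * dB)) :
  CPTP M ->
  (LOCCstar M <->
   exists (Ia Ib : finType)
          (A : Ib -> Ia -> supermap C dX dA) (B : Ia -> Ib -> supermap C dY dB),
     (forall b, instrument (A b)) /\
     (forall a, instrument (B a)) /\
     (forall rho : 'M[C]_(dX * dY),
        M rho = \sum_(a : Ia) \sum_(b : Ib) tensor_map (A b a) (B a b) rho)).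
Proof.
move=> _; split.
  case=> IA [IB [OA [OB [A [B [p [hA [hB [h0 [h1 hM]]]]]]]]]].
  exact: (fwd_ex hA hB h0 h1 hM).
case=> Ia [Ib [A [B [hA [hB hM]]]]].
exact: (bwd hA hB hM).
Qed.
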